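(* Let $M$ be an infinitesimally flexible Kokotsakis mesh with central $n$-gon whose faces are planar, satisfying for every $i$: $v_i,w_i$ not collinear and $a_{i-1},a_i$ not in the plane spanned by $v_i,w_i$. Let $\pi$ be the plane of the central face, and let $l_i$ be the line of intersection of $\pi$ with the plane through $A_i,V_i,W_i$. Assume $l_i$ and $l_{i+1}$ are not parallel for all $i$, let $B_i=l_i\cap l_{i+1}$, assume $B_{i-1}\neq B_i$ and $A_i\notin\{B_{i-1},B_i\}$, and define real numbers $t_i$ by $A_i=t_iB_{i-1}+(1-t_i)B_i$. Then $$\prod_{i=1}^n\frac{1-t_i}{t_i}=(-1)^n .$$
   Context: A Kokotsakis mesh with central $n$-gon consists of a central face with vertices $A_1,\dots,A_n$ (indices in $\mathbb Z/n\mathbb Z$) and further points $V_i,W_i$ such that at each vertex $A_i$ exactly four faces meet, containing the angles $A_{i+1}A_iA_{i-1}$ (central face), $A_{i-1}A_iV_i$, $V_iA_iW_i$, $W_iA_iA_{i+1}$; the face containing $W_iA_iA_{i+1}$ also contains $A_iA_{i+1}V_{i+1}$. Put $a_i=A_{i+1}-A_i$, $v_i=V_i-A_i$, $w_i=W_i-A_i$. Infinitesimally flexible means: there is a nonzero infinitesimal isometric deformation with the central face fixed (velocities of vertices, not all zero, such that each face undergoes an infinitesimal rigid motion and the central face's vertices have zero velocity). Note $A_i\in l_i$ and $B_{i-1},B_i\in l_i$, so $t_i$ is well defined. *)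

(* Defs.v *)
(* Points of Euclidean 3-space are row vectors 'rV[R]_3 over a
   real field R; indices in Z/nZ are modelled by int with n-periodic data. *)
From HB Require Import structures.
From mathcomp Require Import all_boot all_order all_algebra.
Set Implicit Arguments. Unset Strict Implicit. Unset Printing Implicit Defensive.
Import Order.TTheory GRing.Theory Num.Theory.
Local Open Scope ring_scope.

Definition dotp {R : nzRingType} (x y : 'rV[R]_3) : R := \sum_(k < 3) x 0 k * y 0 k.

Definition periodic {T : Type} (n : nat) (f : int -> T) : Prop :=
  forall i : int, f (i + n%:Z) = f i.

Definition in_span2 {R : nzRingType} (x v w : 'rV[R]_3) : Prop :=
  exists a b : R, x = a *: v + b *: w.

Definition not_collinear {R : nzRingType} (v w : 'rV[R]_3) : Prop :=
  forall a b : R, a *: v + b *: w = 0 -> a = 0 /\ b = 0.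

Definition coplanar4 {R : nzRingType} (P Q S T : 'rV[R]_3) : Prop :=
  exists nn : 'rV[R]_3, nn != 0 /\
    dotp (Q - P) nn = 0 /\ dotp (S - P) nn = 0 /\ dotp (T - P) nn = 0.

(* infinitesimal rigid motions of R^3: X |-> X *m S + tau with S skew *)
Definition skew {R : nzRingType} (S : 'M[R]_3) : Prop := S^T = - S.

(* (uA,uV,uW) are velocities of the vertices (A_i,V_i,W_i) such that every face
   (central face A_1..A_n, corner faces A_i V_i W_i, side faces
   A_i A_{i+1} V_{i+1} W_i) undergoes an infinitesimal rigid motion *)
Definition inf_isometric {R : nzRingType} (n : nat)
    (A V W uA uV uW : int -> 'rV[R]_3) : Prop :=
  [/\ periodic n uA, periodic n uV, periodic n uW &
   [/\    (exists (S : 'M[R]_3) (tau : 'rV[R]_3), skew S /\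
      forall i, uA i = A i *m S + tau),
   (forall i, exists (S : 'M[R]_3) (tau : 'rV[R]_3), skew S /\
      [/\ uA i = A i *m S + tau, uV i = V i *m S + tau & uW i = W i *m S + tau]) &
   (forall i, exists (S : 'M[R]_3) (tau : 'rV[R]_3), skew S /\
      [/\ uA i = A i *m S + tau, uA (i + 1) = A (i + 1) *m S + tau,
          uV (i + 1) = V (i + 1) *m S + tau & uW i = W i *m S + tau])]].

(* infinitesimally flexible: a nonzero infinitesimal isometric deformation with
   the central face fixed *)
Definition inf_flexible {R : nzRingType} (n : nat) (A V W : int -> 'rV[R]_3) : Prop :=
  exists uA uV uW : int -> 'rV[R]_3,
    [/\ inf_isometric n A V W uA uV uW,
        (forall i, uA i = 0) &
        ~ (forall i, uA i = 0 /\ uV i = 0 /\ uW i = 0)].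

(* the plane pi = {X | dotp (X - P0) nP = 0}; the line l_i = pi ∩ (A_i + span(v_i,w_i)) *)
Definition on_l {R : nzRingType} (P0 nP : 'rV[R]_3) (A V W : int -> 'rV[R]_3)
    (i : int) (X : 'rV[R]_3) : Prop :=
  dotp (X - P0) nP = 0 /\ in_span2 (X - A i) (V i - A i) (W i - A i).

Definition dir_l {R : nzRingType} (nP : 'rV[R]_3) (A V W : int -> 'rV[R]_3)
    (i : int) (d : 'rV[R]_3) : Prop :=
  dotp d nP = 0 /\ in_span2 d (V i - A i) (W i - A i).

Definition parallel_l {R : nzRingType} (nP : 'rV[R]_3) (A V W : int -> 'rV[R]_3)
    (i j : int) : Prop :=
  forall d, dir_l nP A V W i d <-> dir_l nP A V W j d.

(* Main.v *)
Require Import Defs.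
From HB Require Import structures.
From mathcomp Require Import all_boot all_order all_algebra.
From Stdlib Require Import Ring Classical.
Import Order.TTheory GRing.Theory Num.Theory.
Local Open Scope ring_scope.
Set Implicit Arguments. Unset Strict Implicit.

Section Infra.
Variable R : realFieldType.
Definition radd (x y : R) : R := x + y.
Definition rmul (x y : R) : R := x * y.
Definition ropp (x : R) : R := - x.
Definition rsub (x y : R) : R := x - y.
Definition r0 : R := 0.
Definition r1 : R := 1.
Lemma Rth : @ring_theory R r0 r1 radd rmul rsub ropp eq.
Proof.
constructor; rewrite /radd/rmul/ropp/rsub/r0/r1 => *; [exact: add0r|exact: addrC|exact: addrA|exact: mul1r|exact: mulrC|exact: mulrA|exact: mulrDl|done|exact: subrr].
Qed.
Add Ring Rr : Rth.
Lemma addE (x y : R) : x + y = radd x y. Proof. by []. Qed.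
Lemma mulE (x y : R) : x * y = rmul x y. Proof. by []. Qed.
Lemma oppE (x : R) : - x = ropp x. Proof. by []. Qed.
Lemma zeroE : 0 = r0 :> R. Proof. by []. Qed.
Lemma oneE : 1 = r1 :> R. Proof. by []. Qed.
Ltac rg := rewrite ?addE ?mulE ?oppE ?zeroE ?oneE;
  match goal with |- ?a = ?b => change (@eq R a b) end; ring.

Definition i0 : 'I_3 := ord0.
Definition i1 : 'I_3 := lift ord0 (ord0 : 'I_2).
Definition i2 : 'I_3 := lift ord0 (lift ord0 (ord0 : 'I_1)).
Notation vec := 'rV[R]_3.

Lemma vecP (x y : vec) : x 0 i0 = y 0 i0 -> x 0 i1 = y 0 i1 -> x 0 i2 = y 0 i2 -> x = y.
Proof.
move=> h0 h1 h2; apply/rowP; case=> [[|[|[|m]]] Hm] //.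
- by rewrite (_ : Ordinal Hm = i0) //; apply: val_inj.
- by rewrite (_ : Ordinal Hm = i1) //; apply: val_inj.
- by rewrite (_ : Ordinal Hm = i2) //; apply: val_inj.
Qed.

Lemma dotpE (x y : vec) : dotp x y = x 0 i0 * y 0 i0 + x 0 i1 * y 0 i1 + x 0 i2 * y 0 i2.
Proof. by rewrite /dotp !big_ord_recl big_ord0 addr0 addrA. Qed.

Lemma mulrowE (x : vec) (S : 'M[R]_3) j : (x *m S) 0 j = x 0 i0 * S i0 j + x 0 i1 * S i1 j + x 0 i2 * S i2 j.
Proof. by rewrite mxE !big_ord_recl big_ord0 addr0 addrA. Qed.

Definition mk3 (a b c : R) : vec := \row_(k < 3) nth 0 [:: a; b; c] k.
Lemma mk3_0 a b c : mk3 a b c 0 i0 = a. Proof. by rewrite mxE. Qed.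
Lemma mk3_1 a b c : mk3 a b c 0 i1 = b. Proof. by rewrite mxE. Qed.
Lemma mk3_2 a b c : mk3 a b c 0 i2 = c. Proof. by rewrite mxE. Qed.
Lemma nth_0 (a b c : R) : [:: a; b; c]`_i0 = a. Proof. by []. Qed.
Lemma nth_1 (a b c : R) : [:: a; b; c]`_i1 = b. Proof. by []. Qed.
Lemma nth_2 (a b c : R) : [:: a; b; c]`_i2 = c. Proof. by []. Qed.

Definition cross (x y : vec) : vec :=
  mk3 (x 0 i1 * y 0 i2 - x 0 i2 * y 0 i1) (x 0 i2 * y 0 i0 - x 0 i0 * y 0 i2)
      (x 0 i0 * y 0 i1 - x 0 i1 * y 0 i0).
Definition det3 (x y z : vec) : R := dotp (cross x y) z.
Definition ax (S : 'M[R]_3) : vec := mk3 (S i1 i2) (S i2 i0) (S i0 i1).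

Definition co (x : vec) (k : 'I_3) : R := x ord0 k.
Lemma coE (x : vec) (i : 'I_1) k : x i k = co x k.
Proof. by rewrite (ord1 i). Qed.
Definition me (S : 'M[R]_3) (i k : 'I_3) : R := S i k.
Lemma meE (S : 'M[R]_3) i k : S i k = me S i k.
Proof. by []. Qed.
Ltac crd := rewrite ?/det3 ?/cross ?/ax ?dotpE ?mulrowE ?mk3_0 ?mk3_1 ?mk3_2 ?mxE ?nth_0 ?nth_1 ?nth_2 ?coE ?meE.

Lemma test (x y : vec) a : cross (a *: x + y) y = a *: cross x y.
Proof. apply: vecP; crd; rg. Qed.

Lemma zero_co k : (0 : vec) 0 k = 0.
Proof. by rewrite mxE. Qed.

Lemma sq3_eq0 (a b c : R) : a * a + b * b + c * c = 0 -> [/\ a = 0, b = 0 & c = 0].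
Proof.
move=> h.
have ha : 0 <= a*a by rewrite -expr2 sqr_ge0.
have hb : 0 <= b*b by rewrite -expr2 sqr_ge0.
have hc : 0 <= c*c by rewrite -expr2 sqr_ge0.
move/eqP: h; rewrite paddr_eq0 ?addr_ge0 // => /andP[h1 /eqP h3].
move: h1; rewrite paddr_eq0 // => /andP[/eqP h1 /eqP h2].
by split; apply/eqP; rewrite -sqrf_eq0 expr2; apply/eqP.
Qed.

Lemma dotp_self0 (x : vec) : dotp x x = 0 -> x = 0.
Proof.
rewrite dotpE => /sq3_eq0 [h0 h1 h2]; apply: vecP; rewrite zero_co; [exact: h0|exact: h1|exact: h2].
Qed.

Lemma dotp_self_neq0 (x : vec) : x != 0 -> dotp x x != 0.
Proof. by move=> hx; apply/eqP => /dotp_self0 /eqP; apply/negP. Qed.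


Ltac crd2 := rewrite ?/det3 ?/cross ?/ax ?dotpE ?mulrowE ?mk3_0 ?mk3_1 ?mk3_2 ?mxE ?nth_0 ?nth_1 ?nth_2 ?coE ?meE.

Lemma bac (x w : vec) : dotp x x *: w = dotp x w *: x + cross x (cross w x).
Proof. apply: vecP; crd; rg. Qed.

Lemma cross_x0 (x : vec) : cross x 0 = 0.
Proof. apply: vecP; crd; rg. Qed.

Lemma cross_par (w x : vec) : cross w x = 0 -> x != 0 -> exists c, w = c *: x.
Proof.
move=> h hx; exists (dotp x w / dotp x x).
have hxx := dotp_self_neq0 hx.
have := bac x w; rewrite h cross_x0 addr0 => e.
by apply: (scalerI hxx); rewrite e scalerA mulrCA mulfV // mulr1.
Qed.

Lemma cramer (x y z u : vec) :
  det3 x y z *: u = det3 u y z *: x + det3 x u z *: y + det3 x y u *: z.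
Proof. apply: vecP; crd; rg. Qed.

Lemma lagrange (x y : vec) :
  dotp (cross x y) (cross x y) = dotp x x * dotp y y - dotp x y * dotp x y.
Proof. crd; rg. Qed.

Lemma dotpZ (k : R) (y n : vec) : dotp (k *: y) n = k * dotp y n.
Proof. crd; rg. Qed.
Lemma dotp_lin3 (a b c : R) (x y z n : vec) :
  dotp (a *: x + b *: y + c *: z) n = a * dotp x n + b * dotp y n + c * dotp z n.
Proof. crd; rg. Qed.
Lemma dotp_lin2 (a b : R) (x y n : vec) :
  dotp (a *: x + b *: y) n = a * dotp x n + b * dotp y n.
Proof. crd; rg. Qed.
Lemma det3_def (x y z : vec) : det3 x y z = dotp (cross x y) z.
Proof. by []. Qed.

Lemma dotp0l (x : vec) : dotp 0 x = 0.
Proof. crd; rg. Qed.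

Lemma noncol_neq0 (v w : vec) : not_collinear v w -> v != 0 /\ w != 0.
Proof.
move=> h; split; apply/eqP => hv.
- have := h 1 0; rewrite hv scaler0 scale0r addr0 => /(_ erefl) [/eqP]; by rewrite oner_eq0.
- have := h 0 1; rewrite hv scaler0 scale0r addr0 => /(_ erefl) [_ /eqP]; by rewrite oner_eq0.
Qed.

Lemma uu_id (v w : vec) :
  dotp (dotp w w *: v + (- dotp v w) *: w) (dotp w w *: v + (- dotp v w) *: w) =
  dotp w w * dotp (cross v w) (cross v w).
Proof. crd; rg. Qed.

Lemma cross_neq0 (v w : vec) : not_collinear v w -> cross v w != 0.
Proof.
move=> h; have [_ hw] := noncol_neq0 h.
apply/eqP => hc.
have e := uu_id v w; rewrite hc dotp0l mulr0 in e.
have [h1 _] := h _ _ (dotp_self0 e).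
by move: (dotp_self_neq0 hw); rewrite h1 eqxx.
Qed.

Lemma det3_swap23 (x y z : vec) : det3 x z y = - det3 x y z.
Proof. crd; rg. Qed.
Lemma det3_xx (x z : vec) : det3 x x z = 0.
Proof. crd; rg. Qed.

Lemma plane2D (e y n : vec) : dotp e n = 0 -> dotp y n = 0 -> n != 0 -> e != 0 ->
  det3 e y n = 0 -> exists c, y = c *: e.
Proof.
move=> hen hyn hn he hd.
set g := cross e n.
have hG : dotp g g != 0.
  rewrite /g lagrange hen mulr0 subr0 mulf_neq0 //; exact: dotp_self_neq0.
have C := cramer e n g y.
have hd' : det3 e n y = 0 by rewrite det3_swap23 hd oppr0.
have := congr1 (dotp^~ n) C; rewrite /= dotpZ dotp_lin3 hyn hen hd' !mulr0 ?mul0r ?add0r ?addr0 => /esym /eqP.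
rewrite mulf_eq0 (negbTE (dotp_self_neq0 hn)) orbF => /eqP h2.
rewrite hd' h2 !scale0r !addr0 {1}/det3 -/g in C.
exists (det3 y n g / dotp g g).
by apply: (scalerI hG); rewrite C scalerA mulrCA mulfV // mulr1.
Qed.

Lemma unscale (k : R) (x y : vec) : k != 0 -> k *: x = y -> x = k^-1 *: y.
Proof. by move=> hk <-; rewrite scalerA mulVf // scale1r. Qed.

Lemma det3_span (al be al' be' : R) (v w n : vec) :
  det3 (al *: v + be *: w) (al' *: v + be' *: w) n = (al * be' - al' * be) * det3 v w n.
Proof. crd; rg. Qed.

Lemma line1d (v w a n d d' : vec) : not_collinear v w -> dotp a n = 0 -> ~ in_span2 a v w -> n != 0 ->
  dotp d n = 0 -> in_span2 d v w -> dotp d' n = 0 -> in_span2 d' v w -> d != 0 -> exists c, d' = c *: d.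
Proof.
move=> hvw han hspan hn hdn [al [be hd]] hdn' [al' [be' hd']] hd0.
apply: (@plane2D d d' n) => //.
have [hp | hp] := boolP ((dotp v n == 0) && (dotp w n == 0)).
- exfalso; apply: hspan. case/andP: hp => /eqP hp /eqP hq.
  set g := cross v w.
  have hg := cross_neq0 hvw.
  have hG := dotp_self_neq0 hg.
  have C1 := cramer v w g n.
  have := congr1 (dotp^~ n) C1; rewrite /= dotpZ dotp_lin3 hp hq !mulr0 ?add0r.
  rewrite !det3_def -/g => e1.
  have hgn : dotp g n != 0.
    apply/eqP => h0; move: e1; rewrite h0 mulr0 => /eqP; rewrite mulf_eq0 (negbTE hG) /=.
    by apply/negP; apply: dotp_self_neq0.
  have C2 := cramer v w g a.
  have := congr1 (dotp^~ n) C2; rewrite /= dotpZ dotp_lin3 hp hq han !mulr0 ?add0r.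
  rewrite [det3 v w a]det3_def -/g => /esym /eqP; rewrite mulf_eq0 (negbTE hgn) orbF => /eqP e2.
  rewrite [det3 v w a]det3_def -/g e2 scale0r addr0 {1}/det3 -/g in C2.
  have := unscale hG C2; rewrite scalerDr !scalerA => ->.
  by do 2 eexists.
- subst d d'; rewrite !dotp_lin2 in hdn hdn'.
  have e1 : (al * be' - al' * be) * dotp v n = 0.
    have -> : (al * be' - al' * be) * dotp v n =
      be' * (al * dotp v n + be * dotp w n) - be * (al' * dotp v n + be' * dotp w n) by rg.
    by rewrite hdn hdn' !mulr0 subr0.
  have e2 : (al * be' - al' * be) * dotp w n = 0.
    have -> : (al * be' - al' * be) * dotp w n =
      al * (al' * dotp v n + be' * dotp w n) - al' * (al * dotp v n + be * dotp w n) by rg.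
    by rewrite hdn hdn' !mulr0 subr0.
  have hk : al * be' - al' * be = 0.
    move: hp; rewrite negb_and => /orP [hp|hp].
    + by move/eqP: e1; rewrite mulf_eq0 (negbTE hp) orbF => /eqP.
    + by move/eqP: e2; rewrite mulf_eq0 (negbTE hp) orbF => /eqP.
  by rewrite det3_span hk mul0r.
Qed.

Lemma eq_opp0 (x : R) : x = - x -> x = 0.
Proof. move=> h; apply/eqP; have : x *+ 2 == 0 by rewrite mulr2n {1}h addNr. by rewrite mulrn_eq0. Qed.

Lemma skew_mul (S : 'M[R]_3) (x : vec) : Defs.skew S -> x *m S = cross (ax S) x.
Proof.
move=> hS.
have E : forall i j, S j i = - S i j.
  by move=> i j; move: hS; rewrite /Defs.skew => /matrixP /(_ i j); rewrite !mxE.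
have d0 : me S i0 i0 = 0 by apply: eq_opp0; exact: E.
have d1 : me S i1 i1 = 0 by apply: eq_opp0; exact: E.
have d2 : me S i2 i2 = 0 by apply: eq_opp0; exact: E.
have s1 : me S i2 i1 = - me S i1 i2 by exact: E.
have s2 : me S i0 i2 = - me S i2 i0 by exact: E.
have s3 : me S i1 i0 = - me S i0 i1 by exact: E.
apply: vecP; crd; rewrite ?d0 ?d1 ?d2 ?s1 ?s2 ?s3; rg.
Qed.

Lemma ax_sub (T S : 'M[R]_3) : ax (T - S) = ax T - ax S.
Proof. apply: vecP; crd; rg. Qed.

Lemma skew_sub (T S : 'M[R]_3) : Defs.skew T -> Defs.skew S -> Defs.skew (T - S).
Proof.
rewrite /Defs.skew => hT hS; apply/matrixP => i j.
move/matrixP: hT => /(_ i j); move/matrixP: hS => /(_ i j); rewrite !mxE => -> ->.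
rewrite ?meE; rg.
Qed.

Lemma cross_scale (c : R) (x y : vec) : cross (c *: x) y = c *: cross x y.
Proof. apply: vecP; crd; rg. Qed.
Lemma cross_sub (x y z : vec) : cross (x - y) z = cross x z - cross y z.
Proof. apply: vecP; crd; rg. Qed.
Lemma cross_0l (y : vec) : cross 0 y = 0.
Proof. apply: vecP; crd; rg. Qed.

Lemma dotpBP (x y p n : vec) : dotp (x - y) n = dotp (x - p) n - dotp (y - p) n.
Proof. crd; rg. Qed.
Lemma dotpB (x y n : vec) : dotp (x - y) n = dotp x n - dotp y n.
Proof. crd; rg. Qed.

Lemma span_sub (x y v w : vec) : in_span2 x v w -> in_span2 y v w -> in_span2 (x - y) v w.
Proof.
move=> [a [b ->]] [c [d ->]]; exists (a - c), (b - d).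
apply: vecP; crd; rg.
Qed.
Lemma span_scale (c : R) (x v w : vec) : in_span2 x v w -> in_span2 (c *: x) v w.
Proof. move=> [a [b ->]]; exists (c * a), (c * b); apply: vecP; crd; rg. Qed.
Lemma span_w (c : R) (v w : vec) : in_span2 (c *: w) v w.
Proof. by exists 0, c; rewrite scale0r add0r. Qed.
Lemma span_0 (v w : vec) : in_span2 0 v w.
Proof. by exists 0, 0; rewrite !scale0r addr0. Qed.

Lemma det3_lin2 (l l' : R) (e x y n : vec) :
  det3 e (l *: x - l' *: y) n = l * det3 e x n - l' * det3 e y n.
Proof. crd; rg. Qed.
Lemma det3_scale2 (c : R) (e n : vec) : det3 e (c *: e) n = 0.
Proof. crd; rg. Qed.

Lemma idX (b0 b1 b2 n : vec) (t0 t1 : R) :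
  det3 (b1 - b0) ((t1 *: b1 + (1 - t1) *: b2) - (t0 *: b0 + (1 - t0) *: b1)) n =
  (1 - t1) * det3 (b1 - b0) (b2 - b1) n.
Proof. crd; rg. Qed.
Lemma idY (bm b0 b1 n : vec) (t0 t1 : R) :
  det3 (b1 - b0) ((t1 *: b0 + (1 - t1) *: b1) - (t0 *: bm + (1 - t0) *: b0)) n =
  - (t0 * det3 (b0 - bm) (b1 - b0) n).
Proof. crd; rg. Qed.
Lemma idT (t t' : R) (b0 b1 : vec) :
  (t' *: b0 + (1 - t') *: b1) - (t *: b0 + (1 - t) *: b1) = (t' - t) *: (b0 - b1).
Proof. apply: vecP; crd; rg. Qed.
End Infra.

Lemma intS' (i : nat) : (i.+1)%:Z = i%:Z + 1.
Proof. by rewrite intS addrC. Qed.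

Lemma int_prop (P : int -> Prop) : (forall i, P i <-> P (i - 1)) -> forall k i, P k -> P i.
Proof.
move=> H k i Pk.
have up : forall m : nat, P (k + m%:Z).
  elim=> [|m IH]; first by rewrite addr0.
  apply/(H _).2; by rewrite intS' addrA addrK.
have down : forall m : nat, P (k - m%:Z).
  elim=> [|m IH]; first by rewrite subr0.
  have := (H _).1 IH; by rewrite -addrA -opprD -intS'.
have -> : i = k + (i - k) by rewrite addrC subrK.
case: (i - k) => m; first exact: up.
by rewrite NegzE; exact: down.
Qed.

Section Shift.
Variable R : realFieldType.
Variable n : nat.
Variable h : int -> R.
Hypothesis hp : forall i, h (i + n%:Z) = h i.
Hypothesis hn : (1 <= n)%N.


Lemma shiftS : \prod_(1 <= i < n.+1) h (i%:Z + 1) = \prod_(1 <= i < n.+1) h i%:Z.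
Proof.
rewrite big_nat_recr // big_nat_recl //= mulrC.
congr (_ * _); last first.
  by apply: eq_bigr => i _; rewrite intS'.
by rewrite (addrC (n%:Z)) hp.
Qed.

Lemma shiftP : \prod_(1 <= i < n.+1) h (i%:Z - 1) = \prod_(1 <= i < n.+1) h i%:Z.
Proof.
rewrite big_nat_recl // [in RHS]big_nat_recr //= mulrC.
congr (_ * _); first by apply: eq_bigr => i _; rewrite intS' addrK.
by rewrite subrr -hp add0r.
Qed.
End Shift.

Section Main.
Variable R : realFieldType.
Add Ring RrM : (@Rth R).
Local Ltac rg := rewrite ?addE ?mulE ?oppE ?zeroE ?oneE;
  match goal with |- ?a = ?b => change (@eq R a b) end; ring.
Local Notation vec := 'rV[R]_3.
Local Ltac crd := rewrite ?/det3 ?/cross ?/ax ?dotpE ?mulrowE ?mk3_0 ?mk3_1 ?mk3_2 ?mxE ?nth_0 ?nth_1 ?nth_2 ?coE ?meE.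
Variables (n : nat) (A V W : int -> vec) (P0 nP : vec) (B : int -> vec) (t : int -> R).
Variables (uA uV uW : int -> vec).
Unset Implicit Arguments.
Hypothesis pA : periodic n A.
Hypothesis pV : periodic n V.
Hypothesis pW : periodic n W.
Hypothesis hnP : nP != 0.
Hypothesis hAP : forall i, dotp (A i - P0) nP = 0.
Hypothesis hiso : inf_isometric n A V W uA uV uW.
Hypothesis huA0 : forall i, uA i = 0.
Hypothesis hnz : ~ (forall i, uA i = 0 /\ uV i = 0 /\ uW i = 0).
Hypothesis hvw : forall i, not_collinear (V i - A i) (W i - A i).
Hypothesis hsp : forall i, ~ in_span2 (A i - A (i - 1)) (V i - A i) (W i - A i) /\
             ~ in_span2 (A (i + 1) - A i) (V i - A i) (W i - A i).
Hypothesis hpar : forall i, ~ parallel_l nP A V W i (i + 1).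
Hypothesis hB : forall i, on_l P0 nP A V W i (B i) /\ on_l P0 nP A V W (i + 1) (B i).
Hypothesis hBB : forall i, B (i - 1) != B i.
Hypothesis hAB : forall i, A i != B (i - 1) /\ A i != B i.
Hypothesis ht : forall i, A i = t i *: B (i - 1) + (1 - t i) *: B i.
Set Implicit Arguments.

Local Notation av i := (A (i + 1) - A i).
Local Notation am i := (A i - A (i - 1)).
Local Notation vv i := (V i - A i).
Local Notation ww i := (W i - A i).
Local Notation e i := (B i - B (i - 1)).

Lemma puW : periodic n uW. Proof. by case: hiso. Qed.

Lemma av_n (i : int) : dotp (av i) nP = 0.
Proof. by rewrite (dotpBP _ _ P0) !hAP subrr. Qed.
Lemma am_n (i : int) : dotp (am i) nP = 0.
Proof. by rewrite (dotpBP _ _ P0) !hAP subrr. Qed.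

Lemma ww_neq0 (i : int) : ww i != 0. Proof. by have [] := noncol_neq0 (hvw i). Qed.
Lemma vv_neq0 (i : int) : vv i != 0. Proof. by have [] := noncol_neq0 (hvw i). Qed.

Lemma av_neq0 (i : int) : av i != 0.
Proof. apply/eqP => h; apply: (hsp i).2; rewrite h; exact: span_0. Qed.

Definition g (i : int) := cross (av i) (ww i).
Lemma g_neq0 (i : int) : g i != 0.
Proof.
apply/eqP => h; have [c hc] := cross_par h (ww_neq0 i).
apply: (hsp i).2; rewrite hc; exact: span_w.
Qed.
Definition lam (i : int) := dotp (uW i) (g i) / dotp (g i) (g i).

Lemma mot_diff (X Y tau : vec) (S : 'M[R]_3) : (X *m S + tau) - (Y *m S + tau) = (X - Y) *m S.
Proof. by rewrite opprD addrACA subrr addr0 mulmxBl. Qed.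

Lemma side_uW (i : int) S tau : uA i = A i *m S + tau -> uW i = W i *m S + tau -> uW i = ww i *m S.
Proof.
move=> h1 h4; have -> : uW i = uW i - uA i by rewrite huA0 subr0.
by rewrite h4 h1 mot_diff.
Qed.

Lemma side_ax (i : int) S tau : Defs.skew S -> uA i = A i *m S + tau -> uA (i + 1) = A (i + 1) *m S + tau ->
  uW i = W i *m S + tau -> ax S = lam i *: av i.
Proof.
move=> hS h1 h2 h4.
have h0 : av i *m S = 0 by rewrite -(mot_diff _ _ tau) -h2 -h1 !huA0 subrr.
rewrite skew_mul // in h0.
have [c hc] := cross_par h0 (av_neq0 i).
have hW : uW i = c *: g i by rewrite (side_uW h1 h4) skew_mul // hc cross_scale.
suff -> : lam i = c by [].
by rewrite /lam hW dotpZ mulfK // dotp_self_neq0 // g_neq0.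
Qed.

Lemma rel_span (i : int) : in_span2 (lam i *: av i - lam (i - 1) *: am i) (vv i) (ww i).
Proof.
have [_ _ _ [_ hc hs]] := hiso.
have [T [sig [hT [c1 c2 c3]]]] := hc i.
have [S [tau [hS [s1 s2 s3 s4]]]] := hs i.
have [S' [tau' [hS' [s1' s2' s3' s4']]]] := hs (i - 1).
have axS := side_ax hS s1 s2 s4.
have axS' := side_ax hS' s1' s2' s4'.
rewrite subrK in s2' s3' axS'.
have uWT : uW i = ww i *m T by exact: side_uW c1 c3.
have uVT : uV i = vv i *m T.
  have -> : uV i = uV i - uA i by rewrite huA0 subr0.
  by rewrite c2 c1 mot_diff.
have uWS : uW i = ww i *m S by exact: side_uW s1 s4.
have uVS' : uV i = vv i *m S'.
  have -> : uV i = uV i - uA i by rewrite huA0 subr0.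
  by rewrite s3' s2' mot_diff.
have h1 : cross (ax T - ax S) (ww i) = 0.
  by rewrite -ax_sub -(skew_mul _ (skew_sub hT hS)) mulmxBr -uWT -uWS subrr.
have h2 : cross (ax T - ax S') (vv i) = 0.
  by rewrite -ax_sub -(skew_mul _ (skew_sub hT hS')) mulmxBr -uVT -uVS' subrr.
have [mu hmu] := cross_par h1 (ww_neq0 i).
have [nu hnu] := cross_par h2 (vv_neq0 i).
exists nu, (- mu).
rewrite -axS -axS'.
have -> : ax S - ax S' = (ax T - ax S') - (ax T - ax S) by apply: vecP; crd; rg.
by rewrite hmu hnu scaleNr.
Qed.

Lemma e_dir (i : int) : dotp (e i) nP = 0 /\ in_span2 (e i) (vv i) (ww i).
Proof.
have [[d1 s1] _] := hB i.
have [_ h2] := hB (i - 1).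
move: h2; rewrite /on_l subrK => -[d2 s2].
split; first by rewrite (dotpBP _ _ P0) d1 d2 subrr.
have -> : B i - B (i - 1) = (B i - A i) - (B (i - 1) - A i) by rewrite opprB addrA subrK.
exact: span_sub.
Qed.

Lemma e_neq0 (i : int) : e i != 0.
Proof. by rewrite subr_eq0 eq_sym; exact: hBB. Qed.

Lemma rel_scalar (i : int) : lam i * det3 (e i) (av i) nP = lam (i - 1) * det3 (e i) (am i) nP.
Proof.
have [ed es] := e_dir i.
have xd : dotp (lam i *: av i - lam (i - 1) *: am i) nP = 0.
  by rewrite dotpB !dotpZ av_n am_n !mulr0 subrr.
have [c hc] := line1d (hvw i) (av_n i) (hsp i).2 hnP ed es xd (rel_span i) (e_neq0 i).
have := det3_scale2 c (e i) nP; rewrite -hc det3_lin2 => /eqP; rewrite subr_eq0 => /eqP.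
done.
Qed.

Lemma X_neq0 (i : int) : det3 (e i) (av i) nP != 0.
Proof.
apply/eqP => h; have [ed es] := e_dir i.
have [c hc] := plane2D ed (av_n i) hnP (e_neq0 i) h.
by apply: (hsp i).2; rewrite hc; apply: span_scale.
Qed.

Lemma Y_neq0 (i : int) : det3 (e i) (am i) nP != 0.
Proof.
apply/eqP => h; have [ed es] := e_dir i.
have [c hc] := plane2D ed (am_n i) hnP (e_neq0 i) h.
by apply: (hsp i).1; rewrite hc; apply: span_scale.
Qed.

Definition D (i : int) := det3 (e i) (e (i + 1)) nP.

Lemma X_eq (i : int) : det3 (e i) (av i) nP = (1 - t (i + 1)) * D i.
Proof. by rewrite /D [A (i + 1)]ht [A i]ht addrK idX. Qed.

Lemma Y_eq (i : int) : det3 (e i) (am i) nP = - (t (i - 1) * D (i - 1)).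
Proof. by rewrite /D subrK [A (i - 1)]ht [A i]ht idY. Qed.

Lemma lam_iff (i : int) : lam i = 0 <-> lam (i - 1) = 0.
Proof.
have h := rel_scalar i.
split => h0; rewrite h0 mul0r in h.
- by move/eqP: h; rewrite eq_sym mulf_eq0 (negbTE (Y_neq0 i)) orbF => /eqP.
- by move/eqP: h; rewrite mulf_eq0 (negbTE (X_neq0 i)) orbF => /eqP.
Qed.

Lemma lam_neq0 (i : int) : lam i != 0.
Proof.
apply/eqP => h0.
have all0 : forall j, lam j = 0 by move=> j; exact: (@int_prop (fun j => lam j = 0) lam_iff i j h0).
have [_ _ _ [_ hc hs]] := hiso.
apply: hnz => j; split; first exact: huA0.
split.
- have [S' [tau' [hS' [s1' s2' s3' s4']]]] := hs (j - 1).
  have axS' := side_ax hS' s1' s2' s4'.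
  rewrite subrK in s2' s3'.
  have -> : uV j = uV j - uA j by rewrite huA0 subr0.
  by rewrite s3' s2' mot_diff skew_mul // axS' all0 scale0r cross_0l.
- have [S [tau [hS [s1 s2 s3 s4]]]] := hs j.
  have axS := side_ax hS s1 s2 s4.
  by rewrite (side_uW s1 s4) skew_mul // axS all0 scale0r cross_0l.
Qed.

Lemma pA' (i : int) : A (i + n) = A i. Proof. exact (pA i). Qed.
Lemma pV' (i : int) : V (i + n) = V i. Proof. exact (pV i). Qed.
Lemma pW' (i : int) : W (i + n) = W i. Proof. exact (pW i). Qed.
Lemma puW' (i : int) : uW (i + n) = uW i. Proof. exact (puW i). Qed.

Lemma on_l_per (i : int) X : on_l P0 nP A V W (i + n) X <-> on_l P0 nP A V W i X.
Proof. by rewrite /on_l pA' pV' pW'. Qed.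

Lemma lam_per (i : int) : lam (i + n) = lam i.
Proof. by rewrite /lam /g (addrAC i n%:Z 1) !pA' pW' puW'. Qed.

Lemma B_per (i : int) : B (i + n) = B i.
Proof.
have [h1 h2] := hB (i + n).
rewrite (addrAC i n%:Z 1) !on_l_per in h1 h2.
have [[d1 s1] [d2 s2]] := hB i.
move: h1 h2 => [d1' s1'] [d2' s2'].
apply/eqP; rewrite -subr_eq0; apply/negPn/negP => hd0.
have dd1 : dotp (B (i + n) - B i) nP = 0 by rewrite (dotpBP _ _ P0) d1 d1' subrr.
have ds1 : in_span2 (B (i + n) - B i) (vv i) (ww i).
  have -> : B (i + n) - B i = (B (i + n) - A i) - (B i - A i) by rewrite opprB addrA subrK.
  exact: span_sub.
have ds2 : in_span2 (B (i + n) - B i) (vv (i + 1)) (ww (i + 1)).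
  have -> : B (i + n) - B i = (B (i + n) - A (i + 1)) - (B i - A (i + 1)) by rewrite opprB addrA subrK.
  exact: span_sub.
apply: (hpar i) => d; rewrite /dir_l; split => -[hd hs].
- have [c ->] := line1d (hvw i) (av_n i) (hsp i).2 hnP dd1 ds1 hd hs hd0.
  by split; [rewrite dotpZ dd1 mulr0 | apply: span_scale].
- have [c ->] := line1d (hvw (i + 1)) (av_n (i + 1)) (hsp (i + 1)).2 hnP dd1 ds2 hd hs hd0.
  by split; [rewrite dotpZ dd1 mulr0 | apply: span_scale].
Qed.

Lemma t_per (i : int) : t (i + n) = t i.
Proof.
have h := ht (i + n).
rewrite pA' (addrAC i n%:Z (-1)) !B_per ht in h.
have := idT (t i) (t (i + n)) (B (i - 1)) (B i).
rewrite -h subrr => /esym /eqP; rewrite scaler_eq0 !subr_eq0 (negbTE (hBB i)) orbF.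
by move/eqP.
Qed.

Lemma D_per (i : int) : D (i + n) = D i.
Proof. by rewrite /D !addrK (addrAC i n%:Z 1) (addrAC i n%:Z (-1)) !B_per. Qed.

Definition f (i : int) := lam i * D i.

Lemma D_neq0 (i : int) : D i != 0.
Proof. by move: (X_neq0 i); rewrite X_eq mulf_eq0 negb_or => /andP []. Qed.

Lemma f_neq0 (i : int) : f i != 0.
Proof. by rewrite mulf_neq0 ?lam_neq0 ?D_neq0. Qed.

Lemma f_rel (i : int) : f i * (1 - t (i + 1)) = - (f (i - 1) * t (i - 1)).
Proof.
have h := rel_scalar i; rewrite X_eq Y_eq in h.
rewrite /f.
have -> : lam i * D i * (1 - t (i + 1)) = lam i * ((1 - t (i + 1)) * D i) by rg.
rewrite h; rg.
Qed.

Lemma f_per (i : int) : f (i + n) = f i.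
Proof. by rewrite /f lam_per D_per. Qed.

Lemma t_neq0 (i : int) : t i != 0.
Proof.
apply/eqP => h0; have [_ hA] := hAB i.
by move: hA; rewrite {1}ht h0 scale0r add0r subr0 scale1r eqxx.
Qed.

Lemma main_prod : (1 <= n)%N -> \prod_(1 <= i < n.+1) ((1 - t i%:Z) / t i%:Z) = (-1) ^+ n.
Proof.
move=> hn.
have E : \prod_(1 <= i < n.+1) (f i%:Z * (1 - t (i%:Z + 1))) =
         \prod_(1 <= i < n.+1) (- (f (i%:Z - 1) * t (i%:Z - 1))).
  by apply: eq_bigr => i _; rewrite f_rel.
have S1 : \prod_(1 <= i < n.+1) (1 - t (i%:Z + 1)) = \prod_(1 <= i < n.+1) (1 - t i%:Z).
  apply: (@shiftS R n (fun j => 1 - t j)) => // j /=; by rewrite t_per.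
have Sf : \prod_(1 <= i < n.+1) f (i%:Z - 1) = \prod_(1 <= i < n.+1) f i%:Z.
  apply: (@shiftP R n f) => // j; exact: f_per.
have St : \prod_(1 <= i < n.+1) t (i%:Z - 1) = \prod_(1 <= i < n.+1) t i%:Z.
  apply: (@shiftP R n t) => // j; exact: t_per.
rewrite big_split /= S1 in E.
have E2 : \prod_(1 <= i < n.+1) (- (f (i%:Z - 1) * t (i%:Z - 1))) =
          (-1) ^+ n * (\prod_(1 <= i < n.+1) f i%:Z * \prod_(1 <= i < n.+1) t i%:Z).
  have -> : \prod_(1 <= i < n.+1) (- (f (i%:Z - 1) * t (i%:Z - 1))) =
            \prod_(1 <= i < n.+1) ((-1) * (f (i%:Z - 1) * t (i%:Z - 1))).
    by apply: eq_bigr => i _; rewrite mulN1r.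
  rewrite big_split /= prodr_const_nat subn1 /=; congr (_ * _).
  by rewrite big_split /= Sf St.
rewrite E2 in E.
have hPf : \prod_(1 <= i < n.+1) f i%:Z != 0.
  by rewrite prodf_seq_neq0; apply/allP => i _; rewrite f_neq0.
have hPt : \prod_(1 <= i < n.+1) t i%:Z != 0.
  by rewrite prodf_seq_neq0; apply/allP => i _; rewrite t_neq0.
rewrite prodf_div.
have E3 : \prod_(1 <= i < n.+1) (1 - t i%:Z) = (-1) ^+ n * \prod_(1 <= i < n.+1) t i%:Z.
  by apply: (mulfI hPf); rewrite E mulrCA.
by rewrite E3 mulfK.
Qed.
End Main.

Theorem theorem3 (R : realFieldType) (n : nat) (A V W : int -> 'rV[R]_3)
    (P0 nP : 'rV[R]_3) (B : int -> 'rV[R]_3) (t : int -> R) :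
  (3 <= n)%N ->
  periodic n A -> periodic n V -> periodic n W ->
  (forall i, coplanar4 (A i) (A (i + 1)) (V (i + 1)) (W i)) ->
  nP != 0 -> (forall i, dotp (A i - P0) nP = 0) ->
  (exists i j k : int, not_collinear (A j - A i) (A k - A i)) ->
  inf_flexible n A V W ->
  (forall i, not_collinear (V i - A i) (W i - A i)) ->
  (forall i, ~ in_span2 (A i - A (i - 1)) (V i - A i) (W i - A i) /\
             ~ in_span2 (A (i + 1) - A i) (V i - A i) (W i - A i)) ->
  (forall i, ~ parallel_l nP A V W i (i + 1)) ->
  (forall i, on_l P0 nP A V W i (B i) /\ on_l P0 nP A V W (i + 1) (B i)) ->
  (forall i, B (i - 1) != B i) ->
  (forall i, A i != B (i - 1) /\ A i != B i) ->
  (forall i, A i = t i *: B (i - 1) + (1 - t i) *: B i) ->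
  \prod_(1 <= i < n.+1) ((1 - t i%:Z) / t i%:Z) = (-1) ^+ n.
Proof.
move=> hn3 pA pV pW _ hnP hAP _ [uA [uV [uW [hiso huA0 hnz]]]] hvw hsp hpar hB hBB hAB ht.
apply: (main_prod pA pV pW hnP hAP hiso huA0 hnz hvw hsp hpar hB hBB hAB ht).
by apply: leq_trans hn3.
Qed.
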